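(* Let $1\le m<n$, let $\mathbf{b}\in\{0,1\}^{n-m}$ with $\mathbf{b}\neq\mathbf{0}_{n-m}$, let $y\in\mathbb{Q}[t]$, and let $c,c'$ be elements of multi-degree $\mathbf{W}\in\mathbb{N}^m$ of $\mathcal{L}^{\mathbb{Q}}_{T^m}(\mathbb{Q}[t];\mathbb{Q})$. If $c\sim c'$ in $\mathrm{Tot}(\mathcal{L}^{\mathbb{Q}}_{T^m}(\mathbb{Q}[t];\mathbb{Q}))$, then \[c_{(-,\mathbf{0}_{n-m})}\otimes y_{(\mathbf{0}_m,\mathbf{b})}\sim c'_{(-,\mathbf{0}_{n-m})}\otimes y_{(\mathbf{0}_m,\mathbf{b})}\] in multi-degree $(\mathbf{W},\mathbf{1}_{n-m})$ of $\mathrm{Tot}(\mathcal{L}^{\mathbb{Q}}_{T^n}(\mathbb{Q}[t];\mathbb{Q}))$.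
   Context: The $n$-chain complex $\mathcal{L}^{\mathbb{Q}}_{T^n}(\mathbb{Q}[t];\mathbb{Q})$: in multi-degree $\mathbf{V}\in\mathbb{N}^n$, elements are sums of multi-matrices of size $(v_1+1)\times\cdots\times(v_n+1)$ with entries in $\mathbb{Q}[t]$ at coordinates $\mathbf{v}\ne\mathbf{0}_n$ ($\mathbf{0}\le\mathbf{v}\le\mathbf{V}$) and in $\mathbb{Q}$ at $\mathbf{0}_n$ (tensors over $\mathbb{Q}$; $\mathbb{Q}$ a $\mathbb{Q}[t]$-module via $t\mapsto0$). In direction $i$ the slices are indexed by $j\in\{0,\dots,v_i\}$; $d_{i,j}$ ($j<v_i$) multiplies slices $j$ and $j+1$ entrywise and $d_{i,v_i}$ multiplies slice $v_i$ into slice $0$; $\mathrm{d}_i=\sum_j(-1)^jd_{i,j}$, and the total differential is $\mathrm{d}=\sum_i(-1)^{v_1+\cdots+v_{i-1}}\mathrm{d}_i$. $\sim$ means differing by a boundary in the total complex. For a multi-matrix $c$ in multi-degree $\mathbf{W}$ with entries $c_{\mathbf{a}}$, $c_{(-,\mathbf{0})}\otimes y_{(\mathbf{0},\mathbf{b})}$ is the multi-matrix in multi-degree $(\mathbf{W},\mathbf{1}_{n-m})$ with $c_{\mathbf{a}}$ at $(\mathbf{a},\mathbf{0}_{n-m})$, $y$ at $(\mathbf{0}_m,\mathbf{b})$, $1$ elsewhere, extended linearly to sums. *)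

(* Defs.v *)
From HB Require Import structures.
From mathcomp Require Import all_boot all_order all_algebra.
From mathcomp Require Import finmap.
From mathcomp.multinomials Require Import monalg.
Set Implicit Arguments. Unset Strict Implicit. Unset Printing Implicit Defensive.
Import GRing.Theory.
Local Open Scope ring_scope.

(* Positions in a multi-matrix: v = (v_1,...,v_n) encoded as a seq nat of size n. *)
Definition pos := seq nat.

(* The degree-V group of the
   complex, (tensor_{0<v<=V} Q[t]) (x) Q, is identified with the sub-space of
   polynomials in the variables t_v with v <= V, v <> 0 (the Q factor at the
   position 0 contributes only scalars). A multi-matrix with entries p_v
   (v<>0) and q at 0 corresponds to q * prod_v p_v(t_v). *)
Definition LQ := {malg rat[{cmonom pos}]}.

Definition tv (v : pos) : LQ := << @ucm pos v >>.

Definition subst (s : pos -> LQ) (p : LQ) : LQ :=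
  mmap (fun r : rat => r%:MP)
       (fun mon : {cmonom pos} => \prod_(v <- finsupp mon) s v ^+ mon v) p.

Definition nonzero_pos (v : pos) : bool := has (fun k => k != 0%N) v.

(* v is a position of a multi-matrix of multi-degree V carrying a Q[t] entry *)
Definition valid_pos (V v : pos) : bool :=
  [&& size v == size V, all2 leq v V & nonzero_pos v].

Definition in_deg (V : pos) (p : LQ) : Prop :=
  forall mon, mon \in msupp p -> forall v, v \in finsupp mon -> valid_pos V v.

(* Effect of the face d_{i,j} (direction i, 0-based) on positions, in multi-degree V:
   for j < V_i slices j and j+1 are merged into j; for j = V_i slice V_i is
   merged into slice 0. *)
Definition face_pos (V : pos) (i j : nat) (v : pos) : pos :=
  let a := nth 0%N v i in
  let Vi := nth 0%N V i in
  set_nth 0%N v i (if (j < Vi)%N then (if (a <= j)%N then a else a.-1)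
                   else (if a == Vi then 0%N else a)).

(* d_{i,j}: entries landing at the same position are multiplied; entries landing
   at position 0 act on Q through t |-> 0. *)
Definition face (V : pos) (i j : nat) (p : LQ) : LQ :=
  subst (fun v => let w := face_pos V i j v in
                  if nonzero_pos w then tv w else 0) p.

Definition d_dir (V : pos) (i : nat) (p : LQ) : LQ :=
  if (0 < nth 0%N V i)%N then
    \sum_(j < (nth 0%N V i).+1) (-1) ^+ j * face V i j p
  else 0.

Definition tot_sign (V : pos) (i : nat) : LQ := (-1) ^+ (sumn (take i V)).

Definition lower (V : pos) (i : nat) : pos := set_nth 0%N V i (nth 0%N V i).-1.

(* An element x of Tot is given as a finite list of (V, x_V) pairs (summed);
   component of d x in multi-degree U. *)
Definition bdry (s : seq (pos * LQ)) (U : pos) : LQ :=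
  \sum_(x <- s) \sum_(i < size x.1 | (0 < nth 0%N x.1 i)%N && (lower x.1 i == U))
     tot_sign x.1 i * d_dir x.1 i x.2.

Definition homologous (W : pos) (c c' : LQ) : Prop :=
  exists s : seq (pos * LQ),
    (forall x, x \in s -> [/\ size x.1 = size W, sumn x.1 = (sumn W).+1
                            & in_deg x.1 x.2]) /\
    (forall U : pos, bdry s U = if U == W then c - c' else 0).

Definition tensor_ext (m k : nat) (b : pos) (y : {poly rat}) (c : LQ) : LQ :=
  subst (fun a => tv (a ++ nseq k 0%N)) c *
  \sum_(i < size y) (y`_i)%:MP * tv (nseq m 0%N ++ b) ^+ i.

(* Main.v *)
Require Import Defs.
From HB Require Import structures.
From mathcomp Require Import all_boot all_order all_algebra.
From mathcomp Require Import finmap.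
From mathcomp.multinomials Require Import monalg.
Set Implicit Arguments. Unset Strict Implicit. Unset Printing Implicit Defensive.
Import GRing.Theory.
Local Open Scope ring_scope.

Local Notation "1" := (@mone _) : monom_scope.
Local Notation "x * y" := (mmul x y) : monom_scope.

Definition hs (s : pos -> LQ) (mon : {cmonom pos}) : LQ :=
  \prod_(v <- finsupp mon) s v ^+ mon v.

Lemma substE s p : subst s p = \sum_(k <- msupp p) (p@_k)%:MP * hs s k.
Proof. by []. Qed.

Lemma hsEw s (d : {fset pos}) (mon : {cmonom pos}) : (finsupp mon `<=` d)%fset ->
  hs s mon = \prod_(v <- d) s v ^+ mon v.
Proof.
move=> le; rewrite /hs (big_fset_incl _ le) // => x _.
by rewrite -cmE_eq0 => /eqP ->; rewrite expr0.
Qed.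

Lemma hs1 s : hs s 1%M = 1.
Proof. by rewrite /hs mdom1 big_seq_fset0. Qed.

Lemma hsM s a b : hs s (a * b)%M = hs s a * hs s b.
Proof.
rewrite (hsEw s (fsubsetUl (finsupp a) (finsupp b))).
rewrite (hsEw s (fsubsetUr (finsupp a) (finsupp b))) -big_split /=.
rewrite /hs mdomD.
by apply: eq_bigr => v _; rewrite cmM exprD.
Qed.

Lemma subst_is_additive s : additive (subst s).
Proof. exact: (@mmap_is_additive _ _ _ (@malgC _ rat)). Qed.

HB.instance Definition _ s := GRing.isAdditive.Build LQ LQ (subst s)
  (subst_is_additive s).

Lemma substU s c k : subst s << c *g k >> = c%:MP * hs s k.
Proof. exact: (@mmapU _ _ _ (@malgC _ rat)). Qed.

Lemma substC s c : subst s c%:MP = c%:MP.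
Proof. by rewrite substU hs1 mulr1. Qed.

Lemma subst_is_multiplicative s : multiplicative (subst s).
Proof.
split => [g1 g2|]; last by have := substC s 1; rewrite mpolyC1E.
rewrite malgME raddf_sum mulr_suml /=; apply: eq_bigr=> i _.
rewrite raddf_sum mulr_sumr /=; apply: eq_bigr=> j _.
rewrite !substU hsM rmorphM /=.
exact: (esym (mulrACA _ (hs s i) _ (hs s j))).
Qed.

HB.instance Definition _ s := GRing.isMultiplicative.Build LQ LQ (subst s)
  (subst_is_multiplicative s).

Lemma subst_tv s v : subst s (tv v) = s v.
Proof. by rewrite substU /hs mdomU big_seq_fset1 cmUU expr1 mpolyC1E mul1r. Qed.

Definition uses (P : pos -> Prop) (p : LQ) :=
  forall mon, mon \in msupp p -> forall v, v \in finsupp mon -> P v.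

Lemma uses_weak (P Q : pos -> Prop) p : (forall v, P v -> Q v) -> uses P p -> uses Q p.
Proof. by move=> PQ u mon /u H v /H /PQ. Qed.

Lemma uses0 P : uses P 0.
Proof. by move=> mon; rewrite msupp0 in_fset0. Qed.

Lemma usesD P p q : uses P p -> uses P q -> uses P (p + q).
Proof.
move=> up uq mon /(fsubsetP (msuppD_le p q)); rewrite in_fsetU.
by case/orP => [/up|/uq].
Qed.

Lemma usesN P p : uses P p -> uses P (- p).
Proof. by move=> up mon; rewrite msuppN => /up. Qed.

Lemma usesM P p q : uses P p -> uses P q -> uses P (p * q).
Proof.
move=> up uq mon /msuppM_le [k1 [k2 [h1 h2 ->]]] v.
rewrite mdomD in_fsetU; case/orP => [/(up _ h1)|/(uq _ h2)] //.
Qed.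

Lemma usesC P c : uses P c%:MP.
Proof.
move=> mon /(fsubsetP (msuppC_le c)); rewrite in_fset1 => /eqP ->.
by move=> v; rewrite mdom1 in_fset0.
Qed.

Lemma uses1 P : uses P 1.
Proof. by rewrite -mpolyC1E; apply: usesC. Qed.

Lemma uses_tv (P : pos -> Prop) v : P v -> uses P (tv v).
Proof.
move=> Pv mon; rewrite /tv msuppU1 in_fset1 => /eqP ->.
by move=> u; rewrite mdomU in_fset1 => /eqP ->.
Qed.

Lemma usesX P p e : uses P p -> uses P (p ^+ e).
Proof.
move=> up; elim: e => [|e IH]; first by rewrite expr0; apply: uses1.
by rewrite exprS; apply: usesM.
Qed.

Lemma uses_sum P (I : eqType) (r : seq I) (F : I -> LQ) :
  (forall i, i \in r -> uses P (F i)) -> uses P (\sum_(i <- r) F i).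
Proof.
elim: r => [|a r IH] H; first by rewrite big_nil; apply: uses0.
rewrite big_cons; apply: usesD; first by apply: H; rewrite mem_head.
by apply: IH => i ir; apply: H; rewrite in_cons ir orbT.
Qed.

Lemma uses_prod P (I : eqType) (r : seq I) (F : I -> LQ) :
  (forall i, i \in r -> uses P (F i)) -> uses P (\prod_(i <- r) F i).
Proof.
elim: r => [|a r IH] H; first by rewrite big_nil; apply: uses1.
rewrite big_cons; apply: usesM; first by apply: H; rewrite mem_head.
by apply: IH => i ir; apply: H; rewrite in_cons ir orbT.
Qed.

Lemma uses_subst P s g : uses (fun v => uses P (s v)) g -> uses P (subst s g).
Proof.
move=> ug; rewrite substE; apply: uses_sum => k kg.
apply: usesM; first exact: usesC.
by apply: uses_prod => v vk; apply: usesX; apply: ug vk.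
Qed.

Lemma subst_eq s s' g : uses (fun v => s v = s' v) g -> subst s g = subst s' g.
Proof.
move=> ug; rewrite !substE; apply: eq_big_seq => k kg.
have -> : hs s k = hs s' k.
  by rewrite /hs; apply: eq_big_seq => v vk; rewrite (ug k kg v vk).
by [].
Qed.

Lemma subst_comp s s' g :
  subst s (subst s' g) = subst (fun v => subst s (s' v)) g.
Proof.
rewrite [subst s' g]substE rmorph_sum substE; apply: eq_bigr => k _.
rewrite rmorphM /= substC /hs rmorph_prod /=; congr (_ * _).
by apply: eq_bigr => v _; rewrite rmorphXn.
Qed.

Lemma substM s p q : subst s (p * q) = subst s p * subst s q.
Proof. exact: rmorphM. Qed.
Lemma substD s p q : subst s (p + q) = subst s p + subst s q.
Proof. exact: rmorphD. Qed.
Lemma substB s p q : subst s (p - q) = subst s p - subst s q.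
Proof. exact: rmorphB. Qed.
Lemma subst0 s : subst s 0 = 0.
Proof. exact: rmorph0. Qed.
Lemma substX s p e : subst s (p ^+ e) = subst s p ^+ e.
Proof. exact: rmorphXn. Qed.
Lemma subst_sum s (I : Type) (r : seq I) (P : pred I) (F : I -> LQ) :
  subst s (\sum_(i <- r | P i) F i) = \sum_(i <- r | P i) subst s (F i).
Proof. exact: rmorph_sum. Qed.
Lemma substN1X s e : subst s ((-1) ^+ e) = (-1) ^+ e.
Proof. by rewrite substX rmorphN1. Qed.
Section SeqLemmas.
Local Open Scope nat_scope.

Lemma set_nth_cat (v s : seq nat) i a : i < size v ->
  set_nth 0 (v ++ s) i a = set_nth 0 v i a ++ s.
Proof. by elim: v i => [|x v IH] [|i] //= hi; rewrite IH. Qed.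

Lemma set_nth_id (v : seq nat) i : i < size v -> set_nth 0 v i (nth 0 v i) = v.
Proof. by elim: v i => [|x v IH] [|i] //= hi; rewrite IH. Qed.

Lemma all2_cat (r : nat -> nat -> bool) (s1 s2 t1 t2 : seq nat) :
  size s1 = size t1 -> all2 r (s1 ++ s2) (t1 ++ t2) = all2 r s1 t1 && all2 r s2 t2.
Proof.
by elim: s1 t1 => [|x s1 IH] [|y t1] //= [] /IH ->; rewrite andbA.
Qed.

Lemma all2_nseq0 (V : seq nat) : all2 leq (nseq (size V) 0) V.
Proof. by elim: V. Qed.

Lemma all2_le1 (b : seq nat) : all (fun e => e <= 1) b -> all2 leq b (nseq (size b) 1).
Proof. by elim: b => //= x b IH /andP [-> /IH]. Qed.

Lemma nonzero_cat0 v k : nonzero_pos (v ++ nseq k 0) = nonzero_pos v.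
Proof. by rewrite /nonzero_pos has_cat has_nseq /= andbF orbF. Qed.

Lemma valid_ext V v k : valid_pos V v -> valid_pos (V ++ nseq k 1) (v ++ nseq k 0).
Proof.
case/and3P => /eqP hs ha hn; apply/and3P; split.
- by rewrite !size_cat !size_nseq hs.
- by rewrite all2_cat // ha /=; elim: k.
- by rewrite nonzero_cat0.
Qed.

Lemma face_pos_cat V t v s i j : size v = size V -> i < size V ->
  face_pos (V ++ t) i j (v ++ s) = face_pos V i j v ++ s.
Proof.
move=> hs hi; have hi' : i < size v by rewrite hs.
by rewrite /face_pos !nth_cat hi hi' set_nth_cat.
Qed.

Lemma lower_cat V t i : i < size V -> lower (V ++ t) i = lower V i ++ t.
Proof. by move=> hi; rewrite /lower nth_cat hi set_nth_cat. Qed.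

Lemma size_lower V i : i < size V -> size (lower V i) = size V.
Proof. by move=> hi; rewrite /lower size_set_nth; apply/maxn_idPr. Qed.

End SeqLemmas.

Definition sig k (a : pos) : LQ := tv (a ++ nseq k 0%N).
Definition Yp m (b : pos) (y : {poly rat}) : LQ :=
  \sum_(i < size y) (y`_i)%:MP * tv (nseq m 0%N ++ b) ^+ i.

Lemma tensorE m k b y c : tensor_ext m k b y c = subst (sig k) c * Yp m b y.
Proof. by []. Qed.

Lemma subst_Yp s m b y : s (nseq m 0%N ++ b) = tv (nseq m 0%N ++ b) ->
  subst s (Yp m b y) = Yp m b y.
Proof.
move=> h; rewrite /Yp subst_sum; apply: eq_bigr => i _.
by rewrite substM substC substX subst_tv h.
Qed.

Lemma uses_Yp (P : pos -> Prop) m b y : P (nseq m 0%N ++ b) -> uses P (Yp m b y).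
Proof.
move=> h; rewrite /Yp; apply: uses_sum => i _; apply: usesM; first exact: usesC.
by apply: usesX; apply: uses_tv.
Qed.

Section T.
Variables (m k : nat) (b : pos) (y : {poly rat}).
Local Notation T := (tensor_ext m k b y).

Lemma TD p q : T (p + q) = T p + T q.
Proof. by rewrite !tensorE substD mulrDl. Qed.

Lemma T0 : T 0 = 0.
Proof. by rewrite tensorE subst0 mul0r. Qed.

Lemma TB p q : T (p - q) = T p - T q.
Proof. by rewrite !tensorE substB mulrBl. Qed.

Lemma T_sum (I : Type) (r : seq I) (P : pred I) (F : I -> LQ) :
  T (\sum_(i <- r | P i) F i) = \sum_(i <- r | P i) T (F i).
Proof. exact: (big_morph _ TD T0). Qed.

Lemma T_sign e p : T ((-1) ^+ e * p) = (-1) ^+ e * T p.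
Proof. by rewrite !tensorE substM substN1X mulrA. Qed.

End T.

Section SeqLemmas2.
Local Open Scope nat_scope.

Lemma face_pos_zero V i j : i < size V ->
  face_pos V i j (nseq (size V) 0) = nseq (size V) 0.
Proof.
move=> hi; rewrite /face_pos nth_nseq hi.
set z := (if _ then _ else _).
have -> : z = 0 by rewrite /z; case: ifP => _ //; case: ifP.
have := set_nth_id (v := nseq (size V) 0) (i := i).
by rewrite size_nseq nth_nseq hi; apply.
Qed.

Lemma face_pos_le1 V u i : nth 0 V i = 1 -> nth 0 u i <= 1 ->
  face_pos V i 0 u = face_pos V i 1 u.
Proof. by rewrite /face_pos => ->; case: (nth 0 u i) => [|[|a]]. Qed.

End SeqLemmas2.

Lemma face_T V k m b y x i j : size V = m -> (i < m)%N -> in_deg V x ->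
  nonzero_pos (nseq m 0%N ++ b) ->
  face (V ++ nseq k 1%N) i j (tensor_ext m k b y x) =
  tensor_ext m k b y (face V i j x).
Proof.
move=> hV hi hx hb.
rewrite !tensorE /face [LHS]substM.
rewrite [X in X * _ = _]subst_comp [X in _ = X * _]subst_comp.
rewrite [X in _ * X = _]subst_Yp; last first.
  have hi' : (i < size V)%N by rewrite hV.
  have hz := face_pos_zero j hi'; rewrite hV in hz.
  by rewrite face_pos_cat ?size_nseq // hz hb.
apply: (congr1 (fun p => p * _)); apply: subst_eq.
apply: uses_weak hx => v /and3P [/eqP hs _ _].
rewrite /sig subst_tv face_pos_cat ?hs // ?hV // nonzero_cat0.
case: (nonzero_pos (face_pos V i j v)).
  by rewrite [RHS]subst_tv.
by rewrite [RHS]subst0.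
Qed.

Lemma d_dir_T V k m b y x i : size V = m -> (i < m)%N -> in_deg V x ->
  nonzero_pos (nseq m 0%N ++ b) ->
  d_dir (V ++ nseq k 1%N) i (tensor_ext m k b y x) =
  tensor_ext m k b y (d_dir V i x).
Proof.
move=> hV hi hx hb; rewrite /d_dir nth_cat hV hi.
case: (0 < nth 0 V i)%N; last by rewrite T0.
rewrite [RHS]T_sum.
apply: eq_bigr => j _.
rewrite [RHS]T_sign.
rewrite face_T //.
Qed.

Lemma sum2 (F : nat -> LQ) : \sum_(j < 2) F j = F 0%N + F 1%N.
Proof. by rewrite !big_ord_recl big_ord0 addr0. Qed.

Lemma uses_T_le1 V k m b y x i : size V = m -> (m <= i)%N ->
  all (fun e => e <= 1)%N b -> in_deg V x ->
  uses (fun u => nth 0 u i <= 1)%N (tensor_ext m k b y x).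
Proof.
move=> hV hmi hb1 hx; rewrite tensorE; apply: usesM.
  apply: uses_subst; apply: uses_weak hx => v /and3P[/eqP hs _ _].
  apply: uses_tv; rewrite nth_cat hs hV ltnNge hmi /= nth_nseq.
  by case: ifP.
apply: uses_Yp; rewrite nth_cat size_nseq ltnNge hmi /=.
case: (ltnP (i - m) (size b)) => h; first exact: (allP hb1) _ (mem_nth 0%N h).
by rewrite nth_default.
Qed.

Lemma d_dir_T_high V k m b y x i : size V = m -> (m <= i)%N -> (i < m + k)%N ->
  all (fun e => e <= 1)%N b -> in_deg V x ->
  d_dir (V ++ nseq k 1%N) i (tensor_ext m k b y x) = 0.
Proof.
move=> hV hmi hik hb1 hx.
have hVi : nth 0%N (V ++ nseq k 1%N) i = 1%N.
  rewrite nth_cat hV ltnNge hmi /= nth_nseq.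
  by have -> : (i - m < k)%N by rewrite ltn_subLR.
have hf : face (V ++ nseq k 1%N) i 1%N (tensor_ext m k b y x) =
          face (V ++ nseq k 1%N) i 0%N (tensor_ext m k b y x).
  rewrite /face; apply: subst_eq.
  have hu1 := uses_T_le1 (k:=k) (y:=y) hV hmi hb1 hx.
  apply: (uses_weak _ hu1) => u hu.
  by rewrite /= (face_pos_le1 hVi hu).
rewrite /d_dir hVi.
rewrite (sum2 (fun j => (-1) ^+ j * face (V ++ nseq k 1%N) i j (tensor_ext m k b y x))).
by rewrite expr0 mul1r expr1 mulN1r hf subrr.
Qed.

Lemma in_deg_T V k m b y x : size V = m -> size b = k ->
  all (fun e => e <= 1)%N b -> nonzero_pos (nseq m 0%N ++ b) -> in_deg V x ->
  in_deg (V ++ nseq k 1%N) (tensor_ext m k b y x).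
Proof.
move=> hV hbk hb1 hb hx.
change (uses (fun v => valid_pos (V ++ nseq k 1%N) v) (tensor_ext m k b y x)).
rewrite tensorE; apply: usesM.
  by apply: uses_subst; apply: uses_weak hx => v hv; apply: uses_tv; exact: valid_ext.
apply: uses_Yp; apply/and3P; split => //.
  by rewrite !size_cat !size_nseq hV hbk.
rewrite all2_cat; last by rewrite size_nseq hV.
by rewrite -{1}hV all2_nseq0 /= -hbk; exact: all2_le1.
Qed.

Lemma big_ord_split (n1 n2 : nat) (P : pred nat) (F : nat -> LQ) :
  \sum_(i < n1 + n2 | P i) F i =
  \sum_(i < n1 | P i) F i + \sum_(n1 <= i < n1 + n2 | P i) F i.
Proof.
by rewrite -!big_mkord (@big_cat_nat _ _ _ n1) // leq_addr.
Qed.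

Lemma big_ord_eqn n1 n2 (P : pred nat) (F : nat -> LQ) : n1 = n2 ->
  \sum_(i < n1 | P i) F i = \sum_(i < n2 | P i) F i.
Proof. by move=> ->. Qed.

Lemma catU (L U : pos) m k : size L = m ->
  (L ++ nseq k 1%N == U) = (L == take m U) && (U == take m U ++ nseq k 1%N).
Proof.
move=> hL; apply/eqP/andP => [<-|[/eqP -> /eqP hU]].
  by rewrite take_size_cat.
exact/esym.
Qed.

Lemma inner_T V k m b y x U : size V = m -> in_deg V x ->
  all (fun e => e <= 1)%N b -> nonzero_pos (nseq m 0%N ++ b) ->
  \sum_(i < size (V ++ nseq k 1%N) | (0 < nth 0%N (V ++ nseq k 1%N) i)%N
                                     && (lower (V ++ nseq k 1%N) i == U))
     tot_sign (V ++ nseq k 1%N) i * d_dir (V ++ nseq k 1%N) i (tensor_ext m k b y x)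
  = if U == take m U ++ nseq k 1%N then
      tensor_ext m k b y (\sum_(i < size V | (0 < nth 0%N V i)%N && (lower V i == take m U))
                            tot_sign V i * d_dir V i x)
    else 0.
Proof.
move=> hV hx hb1 hb.
pose P' := fun i : nat => (0 < nth 0%N (V ++ nseq k 1%N) i)%N
                                     && (lower (V ++ nseq k 1%N) i == U).
pose F' := fun i : nat => tot_sign (V ++ nseq k 1%N) i * d_dir (V ++ nseq k 1%N) i (tensor_ext m k b y x).
change (\sum_(i < size (V ++ nseq k 1%N) | P' i) F' i = if U == take m U ++ nseq k 1%N then
      tensor_ext m k b y (\sum_(i < size V | (0 < nth 0%N V i)%N && (lower V i == take m U))
                            tot_sign V i * d_dir V i x)
    else 0).
have hsec : \sum_(m <= i < m + k | P' i) F' i = 0.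
  rewrite big_nat_cond big1 // => i /andP [/andP [hmi hik] _].
  by rewrite /F' d_dir_T_high // mulr0.
have hcond : forall i : 'I_m, P' i = [&& (0 < nth 0%N V i)%N, (lower V i == take m U)
                                      & (U == take m U ++ nseq k 1%N)].
  move=> i; have hi : (i < size V)%N by rewrite hV ltn_ord.
  rewrite /P' nth_cat hi lower_cat // (@catU _ _ m) ?andbA //.
  by rewrite size_lower //.
have hsz : size (V ++ nseq k 1%N) = (m + k)%N by rewrite size_cat size_nseq hV.
rewrite (big_ord_eqn _ _ hsz) big_ord_split hsec addr0 (eq_bigl _ _ hcond).
case hU : (U == take m U ++ nseq k 1%N); last first.
  by rewrite big_pred0 // => i; rewrite !andbF.
rewrite T_sum.
rewrite (big_ord_eqn (fun i => (0 < nth 0 V i)%N && (lower V i == take m U))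
  (fun i => tensor_ext m k b y (tot_sign V i * d_dir V i x)) hV).
apply: eq_big => i; first by rewrite andbT.
move=> _; have hi : (i < size V)%N by rewrite hV ltn_ord.
rewrite /F' /tot_sign [RHS]T_sign (takel_cat _ (ltnW hi)).
by rewrite (@d_dir_T V k m b y x i).
Qed.

Unset Implicit Arguments.

Theorem lemma4p8 (m n : nat) (b : seq nat) (y : {poly rat}) (W : seq nat)
    (c c' : LQ) :
  (1 <= m)%N -> (m < n)%N ->
  size b = (n - m)%N -> all (fun e => e <= 1)%N b -> b != nseq (n - m) 0%N ->
  size W = m -> in_deg W c -> in_deg W c' ->
  homologous W c c' ->
  homologous (W ++ nseq (n - m) 1%N)
    (tensor_ext m (n - m) b y c) (tensor_ext m (n - m) b y c').
Proof.
move=> hm hmn hbs hb1 hb0 hW hc hc' [s [hs hbd]].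
set k := (n - m)%N in hbs hb0 *.
have hbnz : nonzero_pos (nseq m 0%N ++ b).
  rewrite /nonzero_pos has_cat has_nseq /= andbF /=.
  apply: contraR hb0 => /hasPn h; apply/eqP; rewrite -hbs; apply/all_pred1P.
  by apply/allP => e /h; rewrite negbK.
exists (map (fun x => (x.1 ++ nseq k 1%N, tensor_ext m k b y x.2)) s); split.
  move=> x' /mapP [x hx ->] /=; have [h1 h2 h3] := hs x hx; split.
  - by rewrite !size_cat h1.
  - by rewrite !sumn_cat h2 sumn_nseq mul1n addSn.
  - by apply: in_deg_T => //; rewrite h1 hW.
move=> U; rewrite /bdry big_map /=.
have hinner : forall x, x \in s ->
  \sum_(i < size (x.1 ++ nseq k 1%N) | (0 < nth 0%N (x.1 ++ nseq k 1%N) i)%N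
                                     && (lower (x.1 ++ nseq k 1%N) i == U))
     tot_sign (x.1 ++ nseq k 1%N) i * d_dir (x.1 ++ nseq k 1%N) i (tensor_ext m k b y x.2)
  = if U == take m U ++ nseq k 1%N then
      tensor_ext m k b y (\sum_(i < size x.1 | (0 < nth 0%N x.1 i)%N && (lower x.1 i == take m U))
                            tot_sign x.1 i * d_dir x.1 i x.2)
    else 0.
  move=> x hx; have [h1 h2 h3] := hs x hx.
  by apply: inner_T => //; rewrite h1 hW.
rewrite (eq_big_seq _ hinner).
case hU : (U == take m U ++ nseq k 1%N); last first.
  rewrite big1 // ; case: eqP => // hUW; move: hU.
  by rewrite hUW take_size_cat ?hW // eqxx.
rewrite -T_sum.
have := hbd (take m U); rewrite /bdry => ->.
have -> : (U == W ++ nseq k 1%N) = (take m U == W).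
  apply/eqP/eqP => [->|hT]; first by rewrite take_size_cat.
  by rewrite (eqP hU) hT.
by case: ifP => _; rewrite ?TB ?T0.
Qed.
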